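(* Let $K \ge 2$ be an integer, let $k \in \{1,\dots,K-1\}$, let $\mathbf{x}_0 = \mathbf{e}_k \in \{0,1\}^K$ be the $k$-th standard basis vector, and let $\mathbf{e}_K$ denote the $K$-th standard basis vector (the mask state). Let $\boldsymbol{\epsilon} = (\epsilon_1,\dots,\epsilon_K) \sim \mathcal{N}(\mathbf{0}, \mathbf{I}_K)$, let $Y = \max_{j \ne k} \epsilon_j - \epsilon_k$, and let $F_Y$ be the cumulative distribution function of $Y$. For real numbers $\tilde{\alpha}$ and $\tilde{\sigma} > 0$ with $\tilde{\alpha}^2 + \tilde{\sigma}^2 = 1$, define $\mathbf{w} = \tilde{\alpha}\mathbf{x}_0 + \tilde{\sigma}\boldsymbol{\epsilon}$ and $$\mathbf{z} = \begin{cases} \mathbf{x}_0 & \text{if } \mathbf{w}^{(k)} > \max_{j\neq k} \mathbf{w}^{(j)},\\ \mathbf{e}_K & \text{otherwise.}\end{cases}$$ Then for every $\gamma \in (0,1)$ there exist $\tilde{\alpha} \in \mathbb{R}$ and $\tilde{\sigma} > 0$ with $\tilde{\alpha}^2 + \tilde{\sigma}^2 = 1$, namely any such pair with $\tilde{\alpha}/\tilde{\sigma} = F_Y^{-1}(\gamma)$, for which $P(\mathbf{z} = \mathbf{x}_0) = \gamma$.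
   Context: This models one token of a masked discrete diffusion as the projection of a variance-preserving Gaussian latent: the discrete state keeps the ground-truth token $\mathbf{x}_0$ exactly when the ground-truth coordinate of the latent strictly exceeds all other coordinates, and otherwise collapses to the mask vector $\mathbf{e}_K$. Here $F_Y^{-1}$ denotes the inverse of $F_Y$ viewed as a map from $\mathbb{R}$ onto $(0,1)$. *)

(* Defs.v *)
From HB Require Import structures.
From mathcomp Require Import all_boot all_order all_algebra.
From mathcomp Require Import all_classical all_reals all_analysis.
Set Implicit Arguments. Unset Strict Implicit. Unset Printing Implicit Defensive.
Import Order.TTheory GRing.Theory Num.Theory.
Import numFieldNormedType.Exports.
Local Open Scope classical_set_scope.
Local Open Scope ring_scope.

(* Standard basis vector e_j of R^K, with 0-based index j (paper's e_{j+1}). *)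
Definition stdbasis (R : realType) (K : nat) (j : nat) : 'cV[R]_K :=
  \col_(i < K) ((nat_of_ord i == j)%:R).

(* The default value of the big max is some v j0 with j0 <> k,
   which does not change the maximum by idempotency. *)
Definition max_off (R : realType) (K : nat) (k : 'I_K) (v : 'I_K -> R) : R :=
  match [pick j | j != k] with
  | Some j0 => \big[Num.max/v j0]_(j | j != k) v j
  | None => 0
  end.

Definition mutually_independent d (T : measurableType d) (R : realType)
  (P : probability T R) (K : nat) (X : 'I_K -> {RV P >-> R}) : Prop :=
  forall B : 'I_K -> set R, (forall j, measurable (B j)) ->
    P [set w | forall j, B j (X j w)] = (\prod_(j < K) P (X j @^-1` B j))%E.

Definition std_gaussian_vector d (T : measurableType d) (R : realType)
  (P : probability T R) (K : nat) (eps : 'I_K -> {RV P >-> R}) : Prop :=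
  mutually_independent eps /\
  (forall j (B : set R), measurable B ->
     distribution P (eps j) B = normal_prob 0 1 B).

Definition Yvar d (T : measurableType d) (R : realType) (P : probability T R)
  (K : nat) (k : 'I_K) (eps : 'I_K -> {RV P >-> R}) (w : T) : R :=
  max_off k (fun j => eps j w) - eps k w.

Definition cdfY d (T : measurableType d) (R : realType) (P : probability T R)
  (K : nat) (k : 'I_K) (eps : 'I_K -> {RV P >-> R}) (t : R) : R :=
  fine (P [set w | Yvar k eps w <= t]).

Definition wvec d (T : measurableType d) (R : realType) (P : probability T R)
  (K : nat) (k : 'I_K) (eps : 'I_K -> {RV P >-> R}) (a s : R) (w : T)
  : 'cV[R]_K :=
  a *: stdbasis R K k + s *: \col_(i < K) eps i w.

Definition zvec d (T : measurableType d) (R : realType) (P : probability T R)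
  (K : nat) (k : 'I_K) (eps : 'I_K -> {RV P >-> R}) (a s : R) (w : T)
  : 'cV[R]_K :=
  let W := wvec k eps a s w in
  if max_off k (fun j => W j 0) < W k 0 then stdbasis R K k
  else stdbasis R K K.-1.

(* Main.v *)
Require Import Defs.
From HB Require Import structures.
From mathcomp Require Import all_boot all_order all_algebra.
From mathcomp Require Import all_classical all_reals all_analysis.
From mathcomp Require Import measurable_realfun ring lra.
Import Order.TTheory GRing.Theory Num.Theory.
Import numFieldNormedType.Exports.
Local Open Scope classical_set_scope.
Local Open Scope ring_scope.

Section normal_bounds.
Variable R : realType.

Lemma peak1_le1 : normal_peak (1:R) <= 1.
Proof.
rewrite /normal_peak expr1n mul1r.
have h2 : 1 <= pi *+ 2 :> R by rewrite mulr2n; have := pi_ge2 R; lra.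
have h3 : 0 < pi *+ 2 :> R by apply: lt_le_trans h2; exact: ltr01.
rewrite invf_le1 ?sqrtr_gt0 //.
by rewrite -sqrtr1 ler_sqrt // ltW.
Qed.

Lemma normal_itv_ub (a b : R) : a <= b ->
  (normal_prob 0 1 `[a, b] <= (b - a)%:E)%E.
Proof.
move=> ab; rewrite /normal_prob.
apply: (@le_trans _ _ (\int[lebesgue_measure]_(x in `[a, b]) (cst 1%:E x))%E).
  apply: ge0_le_integral => //=.
  - by move=> x _; rewrite lee_fin normal_pdf_ge0.
  - by apply/measurable_EFinP; apply: measurable_funTS; exact: measurable_normal_pdf.
  - move=> x _; rewrite lee_fin; apply: le_trans (peak1_le1).
    by apply: normal_pdf_ub; rewrite oner_neq0.
rewrite integral_cst //= mul1e lebesgue_measure_itv /=.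
rewrite lte_fin; case: ltP => //; rewrite lee_fin subr_ge0 //.
Qed.

Lemma normal_itv_gt0 (a b : R) : a < b ->
  (0 < normal_prob 0 1 `]a, b[)%E.
Proof.
move=> ab; rewrite /normal_prob.
set c := normal_peak (1:R) * expR (- (a ^+ 2 + b ^+ 2)).
have c0 : 0 < c by rewrite mulr_gt0 ?expR_gt0 // normal_peak_gt0 // oner_neq0.
apply: (@lt_le_trans _ _ (\int[lebesgue_measure]_(x in `]a, b[) (cst c%:E x))%E).
  rewrite integral_cst //= lebesgue_measure_itv /= lte_fin ab -EFinD -EFinM lte_fin.
  by rewrite mulr_gt0 // subr_gt0.
apply: ge0_le_integral => //=.
- by move=> x _; rewrite lee_fin ltW.
- by apply/measurable_EFinP; apply: measurable_funTS; exact: measurable_normal_pdf.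
move=> x; rewrite in_itv /= => /andP[ax xb].
rewrite lee_fin /normal_pdf oner_eq0 /c ler_pM2l ?normal_peak_gt0 ?oner_neq0 //.
rewrite /normal_fun ler_expR subr0 expr1n.
have h : x ^+ 2 <= a ^+ 2 + b ^+ 2.
  have [x0|x0] := leP 0 x; nra.
have := sqr_ge0 x; lra.
Qed.

End normal_bounds.

Definition nnset (R : realType) : set R := [set` `[0, +oo[].

Section core.
Context d (T : measurableType d) (R : realType) (P : probability T R).
Variables (X Z : T -> R).
Hypothesis mX : measurable_fun setT X.
Hypothesis mZ : measurable_fun setT Z.
Hypothesis indep : forall A B, measurable A -> measurable B ->
  P (X @^-1` A `&` Z @^-1` B) = (P (X @^-1` A) * P (Z @^-1` B))%E.
Hypothesis Zub : forall a b, a <= b -> (P (Z @^-1` `[a, b]) <= (b - a)%:E)%E.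

Let mpre (f : T -> R) : measurable_fun setT f ->
  forall B, measurable B -> measurable (f @^-1` B).
Proof. by move=> mf B mB; rewrite -[_ @^-1` _]setTI; exact: mf. Qed.

Lemma core_bound (c h : R) : 0 < h ->
  (P (X @^-1` (nnset R) `&` (X \- Z)%R @^-1` `[c, (c + h)%R]) <= (2 * h)%:E)%E.
Proof.
move=> h0.
pose I := fun n : nat => [set` `[n%:R * h, n.+1%:R * h[] : set R.
pose J := fun n : nat => [set` `[n%:R * h - c - h, n.+1%:R * h - c]] : set R.
pose F := fun n => X @^-1` I n `&` Z @^-1` J n.
have mF n : measurable (F n).
  by apply: measurableI; apply: mpre => //; exact: measurable_itv.
have mXZ : measurable_fun setT (X \- Z) by exact: measurable_funB.
apply: le_trans (measure_sigma_subadditive P (F := F) mF _ _) _.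
- by apply: measurableI; apply: mpre => //; exact: measurable_itv.
- move=> w [/= X0 XZ]; rewrite /nnset /= in_itv /= andbT in X0.
  rewrite /= in_itv /= in XZ; move/andP: XZ => [XZ1 XZ2].
  have Xh0 : 0 <= X w / h by rewrite divr_ge0 // ltW.
  have /andP[n1 n2] := truncn_itv Xh0.
  rewrite ler_pdivlMr // in n1; rewrite ltr_pdivrMr // in n2.
  exists (Num.truncn (X w / h)) => //.
  split; rewrite /I /J /= in_itv /=; apply/andP; split; lra.
apply: (@le_trans _ _ (\sum_(0 <= n <oo) ((2 * h)%:E * P (X @^-1` I n)))%E).
  apply: lee_nneseries => [n _ _|n _]; first exact: measure_ge0.
  rewrite /F /= indep //; try exact: measurable_itv.
  rewrite [X in (_ <= X)%E]muleC; apply: lee_wpmul2l; first exact: measure_ge0.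
  have e : n.+1%:R = n%:R + 1 :> R by rewrite natr1.
  have hab : n%:R * h - c - h <= n.+1%:R * h - c.
    by rewrite e mulrDl mul1r; lra.
  rewrite /J; apply: le_trans (Zub _ _ hab) _.
  rewrite lee_fin e mulrDl mul1r; lra.
rewrite nneseriesZl; last by move=> *; exact: measure_ge0.
rewrite -[X in (_ <= X)%E]mule1; apply: lee_wpmul2l; first by rewrite lee_fin; lra.
have tI : trivIset setT (fun n => X @^-1` I n).
  move=> n m _ _ [w [/= + +]]; rewrite /I /= !in_itv /= => /andP[a1 a2] /andP[b1 b2].
  have nm : n%:R < m.+1%:R :> R by rewrite -(ltr_pM2r h0); lra.
  have mn : m%:R < n.+1%:R :> R by rewrite -(ltr_pM2r h0); lra.
  rewrite ltr_nat in nm; rewrite ltr_nat in mn; apply/eqP; rewrite eqn_leq.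
  by rewrite -ltnS nm -ltnS mn.
apply: le_trans (subset_lee_nneseries (P := xpredT) (Q := fun i => i \in [set: nat]) _ _ _) _.
- by move=> *; exact: measure_ge0.
- by move=> *; rewrite in_setT.
rewrite -measure_bigcup //; last by move=> n _; apply: mpre => //; exact: measurable_itv.
apply: (probability_le1 P).
apply: bigcup_measurable => n _; apply: mpre => //; exact: measurable_itv.
Qed.

End core.

Lemma mpreT d (T : measurableType d) (R : realType) (f : T -> R) :
  measurable_fun setT f -> forall B : set R, measurable B -> measurable (f @^-1` B).
Proof. by move=> mf B mB; rewrite -[_ @^-1` _]setTI; exact: mf. Qed.

Lemma pair_strip d (T : measurableType d) (R : realType) (P : probability T R)
  (X Z : T -> R) : measurable_fun setT X -> measurable_fun setT Z ->
  (forall A B, measurable A -> measurable B ->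
    P (X @^-1` A `&` Z @^-1` B) = (P (X @^-1` A) * P (Z @^-1` B))%E) ->
  (forall a b, a <= b -> (P (Z @^-1` `[a, b]) <= (b - a)%:E)%E) ->
  forall c h : R, 0 < h ->
  (P ((X \- Z)%R @^-1` `[c, (c + h)%R]) <= (4 * h)%:E)%E.
Proof.
move=> mX mZ indep Zub c h h0.
have mN : forall f : T -> R, measurable_fun setT f -> measurable_fun setT (fun w => - f w).
  by move=> f mf; apply: measurableT_comp => //; exact: oppr_measurable.
have mXZ : measurable_fun setT (X \- Z) by exact: measurable_funB.
have mO : forall A : set R, measurable A -> measurable [set x : R | A (- x)].
  move=> A mA; have := oppr_measurable measurableT mA; rewrite setTI; exact.
pose NX := fun w => - X w; pose NZ := fun w => - Z w.
have mNX : measurable_fun setT NX by exact: mN.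
have mNZ : measurable_fun setT NZ by exact: mN.
have mXZ' : measurable_fun setT (NX \- NZ) by exact: measurable_funB.
have mnn : measurable (nnset R) by exact: measurable_itv.
have H1 := @core_bound _ _ _ P X Z mX mZ indep Zub c h h0.
have H2 := @core_bound _ _ _ P NX NZ (mN _ mX) (mN _ mZ) _ _ (- c - h) h h0.
have {}H2 : (P (NX @^-1` nnset R `&` (NX \- NZ)%R @^-1` `[(- c - h)%R, (- c - h + h)%R]) <= (2 * h)%:E)%E.
  apply: H2.
  - by move=> A B mA mB; exact: (indep _ _ (mO _ mA) (mO _ mB)).
  - move=> a b ab.
    have -> : NZ @^-1` `[a, b] = Z @^-1` `[- b, - a].
      by apply/seteqP; split => w /=; rewrite /NZ !in_itv /= => /andP[h1 h2]; apply/andP; split; lra.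
    by apply: le_trans (Zub _ _ _) _; [lra | rewrite lee_fin; lra].
apply: (@le_trans _ _ (P (X @^-1` nnset R `&` (X \- Z)%R @^-1` `[c, (c + h)%R] `|`
   NX @^-1` nnset R `&` (NX \- NZ)%R @^-1` `[(- c - h)%R, (- c - h + h)%R]))).
  apply: le_measure; rewrite ?inE.
  - by apply: mpreT => //; exact: measurable_itv.
  - by apply: measurableU; apply: measurableI; apply: mpreT => //; exact: measurable_itv.
  move=> w /=; rewrite /nnset /= !in_itv /= !andbT => /andP[h1 h2].
  have [x0|x0] := leP 0 (X w); [left|right]; split => //=; rewrite /NX /NZ /= ?in_itv /= in h1 h2 *; try (apply/andP; split); lra.
apply: le_trans (measureU2 _ _ _) _.
- by apply: measurableI; apply: mpreT => //; exact: measurable_itv.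
- by apply: measurableI; apply: mpreT => //; exact: measurable_itv.
have -> : (4 * h)%:E = ((2 * h)%:E + (2 * h)%:E)%E by rewrite -EFinD; congr (_%:E); lra.
exact: leeD.
Qed.

Section bigmax.
Variables (R : realType) (I : finType) (Pr : pred I) (F : I -> R).

Lemma bigmax_attain x : \big[Num.max/x]_(i | Pr i) F i = x \/
  exists2 i, Pr i & \big[Num.max/x]_(i | Pr i) F i = F i.
Proof.
apply: (big_ind (fun y => y = x \/ exists2 i, Pr i & y = F i)).
- by left.
- move=> y z Hy Hz; rewrite maxEle; case: ifP => _; [exact: Hz|exact: Hy].
- by move=> i Pi; right; exists i.
Qed.

Lemma bigmax_ge x j : Pr j -> F j <= \big[Num.max/x]_(i | Pr i) F i.
Proof.
move=> Pj; rewrite -big_filter.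
have : j \in [seq i <- index_enum I | Pr i] by rewrite mem_filter Pj mem_index_enum.
elim: [seq i <- index_enum I | Pr i] => [//|a s IH]; rewrite inE big_cons.
case/orP => [/eqP ->|js]; rewrite le_max; first by rewrite lexx.
by rewrite IH // orbT.
Qed.

End bigmax.

Section maxoff.
Variables (R : realType) (K : nat) (k : 'I_K).
Hypothesis jk : exists j : 'I_K, j != k.

Lemma max_off_attain (v : 'I_K -> R) : exists2 j, j != k & max_off k v = v j.
Proof.
rewrite /max_off; case: pickP => [j0 /= Hj0|none]; last first.
  by exfalso; case: jk => j; rewrite none.
have [->|[j Hj ->]] := @bigmax_attain R _ (fun j => j != k) v (v j0).
  by exists j0.
by exists j.
Qed.

Lemma max_off_ge (v : 'I_K -> R) j : j != k -> v j <= max_off k v.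
Proof.
move=> jk'; rewrite /max_off; case: pickP => [j0 /= Hj0|none]; last first.
  by move: (none j); rewrite jk'.
exact: bigmax_ge.
Qed.

Lemma max_off_scale (f g : 'I_K -> R) (s : R) : 0 < s ->
  (forall j, j != k -> f j = s * g j) -> max_off k f = s * max_off k g.
Proof.
move=> s0 fg; apply/le_anti/andP; split.
  have [j jk' ->] := max_off_attain f; rewrite fg // ler_pM2l //.
  exact: max_off_ge.
have [j jk' ->] := max_off_attain g; rewrite -fg //.
exact: max_off_ge.
Qed.

End maxoff.

Section Ymeas.
Context d (T : measurableType d) (R : realType) (P : probability T R).
Variables (K : nat) (k : 'I_K) (eps : 'I_K -> {RV P >-> R}).

Lemma measurable_max_off : measurable_fun setT (fun w => max_off k (fun j => eps j w)).
Proof.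
rewrite /max_off; case: pickP => [j0 _|_]; last exact: measurable_cst.
have : forall (s : seq 'I_K) (f0 : T -> R), measurable_fun setT f0 ->
    measurable_fun setT (fun w => \big[Num.max/f0 w]_(j <- s | j != k) eps j w).
  elim => [f0 mf0|a s IH f0 mf0].
    by rewrite (_ : (fun w => _) = f0) //; apply/funext => w; rewrite big_nil.
  case: (boolP (a != k)) => ak.
    rewrite (_ : (fun w => _) = (fun w => Num.max (eps a w)
      (\big[Num.max/f0 w]_(j <- s | j != k) eps j w))).
      by apply: measurable_maxr => //; exact: IH.
    by apply/funext => w; rewrite big_cons ak.
  rewrite (_ : (fun w => _) = (fun w => \big[Num.max/f0 w]_(j <- s | j != k) eps j w)).
    exact: IH.
  by apply/funext => w; rewrite big_cons (negbTE ak).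
by apply; exact: measurable_funPT.
Qed.

Lemma measurable_Yvar : measurable_fun setT (Yvar k eps).
Proof. by apply: measurable_funB; [exact: measurable_max_off|exact: measurable_funPT]. Qed.

End Ymeas.

HB.instance Definition _ d (T : measurableType d) (R : realType) (P : probability T R)
  (K : nat) (k : 'I_K) (eps : 'I_K -> {RV P >-> R}) :=
  isMeasurableFun.Build _ _ _ _ (Yvar k eps) (@measurable_Yvar d T R P K k eps).


Lemma union_bound d (T : measurableType d) (R : realType) (P : probability T R)
  (I : Type) (D : I -> set T) (b : R) :
  (forall i, measurable (D i)) -> (forall i, (P (D i) <= b%:E)%E) ->
  forall s : seq I, (P (\big[setU/set0]_(i <- s) D i) <= (b *+ size s)%:E)%E.
Proof.
move=> mD bD; elim => [|a s IH]; first by rewrite big_nil measure0.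
rewrite big_cons /=.
apply: le_trans (measureU2 _ (mD a) _) _.
  by apply: bigsetU_measurable => i _; exact: mD.
by rewrite mulrS EFinD; exact: leeD (bD a) IH.
Qed.

Lemma in_bigsetU (T : Type) (I : eqType) (D : I -> set T) (s : seq I) w :
  (exists i, i \in s /\ D i w) -> (\big[setU/set0]_(i <- s) D i) w.
Proof.
elim: s => [|a s IH] [i [Hi Di]]; first by rewrite in_nil in Hi.
rewrite big_cons; rewrite in_cons in Hi; case/orP: Hi => [/eqP ai|Hi].
  by left; rewrite -ai.
by right; apply: IH; exists i.
Qed.

Section main.
Context d (T : measurableType d) (R : realType) (P : probability T R).
Variables (K : nat) (k : 'I_K) (eps : 'I_K -> {RV P >-> R}).
Hypothesis hk : (k < K.-1)%N.
Hypothesis heps : std_gaussian_vector eps.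

Let Y := Yvar k eps.

Let jK : exists j : 'I_K, j != k.
Proof.
have hK : (K.-1 < K)%N by move: hk; case: K k => // [[]] //.
exists (Ordinal hK); apply/eqP => /(congr1 val) /= e.
by move: hk; rewrite -e ltnn.
Qed.

Lemma eps_dist j B : measurable B -> P (eps j @^-1` B) = normal_prob 0 1 B.
Proof. by move=> mB; have := heps.2 j B mB. Qed.

Lemma eps_pair i j : i != j -> forall A B, measurable A -> measurable B ->
  P (eps i @^-1` A `&` eps j @^-1` B) = (P (eps i @^-1` A) * P (eps j @^-1` B))%E.
Proof.
move=> ij A B mA mB.
pose Bf l := if l == i then A else if l == j then B else setT.
have mBf l : measurable (Bf l) by rewrite /Bf; case: ifP => //; case: ifP.
have := heps.1 Bf mBf.
have -> : [set w | forall l, Bf l (eps l w)] = eps i @^-1` A `&` eps j @^-1` B.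
  apply/seteqP; split => w /=.
    move=> H; split; first by have := H i; rewrite /Bf eqxx.
    by have := H j; rewrite /Bf eqxx eq_sym (negbTE ij).
  move=> [Ai Bj] l; rewrite /Bf; case: ifP => [/eqP -> //|_].
  by case: ifP => [/eqP -> //|_].
move=> ->; rewrite (bigD1 i) //= (bigD1 j) 1?eq_sym //= big1 ?mule1.
  by rewrite /Bf eqxx eq_sym (negbTE ij) eqxx.
move=> l /andP[li lj]; rewrite /Bf (negbTE li) (negbTE lj) preimage_setT.
exact: probability_setT.
Qed.

Lemma eps_ub j (a b : R) : a <= b -> (P (eps j @^-1` `[a, b]) <= (b - a)%:E)%E.
Proof. by move=> ab; rewrite eps_dist; [exact: normal_itv_ub|exact: measurable_itv]. Qed.

Lemma Ystrip (c h : R) : 0 < h ->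
  (P (Y @^-1` `[c, (c + h)%R]) <= ((4 * h) *+ K)%:E)%E.
Proof.
move=> h0.
pose D j := if j == k then set0 else (eps j \- eps k)%R @^-1` `[c, (c + h)%R].
have mD j : measurable (D j).
  rewrite /D; case: ifP => // _; apply: mpreT; last exact: measurable_itv.
  by apply: measurable_funB; exact: measurable_funPT.
have bD j : (P (D j) <= (4 * h)%:E)%E.
  rewrite /D; case: ifP => [_|jk]; first by rewrite measure0 lee_fin; lra.
  apply: pair_strip => //; try exact: measurable_funPT.
    by apply: eps_pair; rewrite jk.
  exact: eps_ub.
have UB := @union_bound _ _ _ P _ D _ mD bD (enum 'I_K).
rewrite size_enum_ord in UB; apply: le_trans UB.
apply: (@le_measure _ _ _ P); rewrite ?inE.
- apply: measurable_funPTI; exact: measurable_itv.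
- by apply: bigsetU_measurable => i _; exact: mD.
move=> w /=; rewrite in_itv /= => /andP[h1 h2].
have [j jk' Ej] := @max_off_attain R K k jK (fun j => eps j w).
apply: in_bigsetU; exists j; split.
  by rewrite mem_enum.
rewrite /D (negbTE jk') /= in_itv /=; rewrite /Y /Yvar Ej in h1 h2.
by rewrite h1 h2.
Qed.


Let C : R := 4 *+ K.
Let C0 : 0 < C.
Proof. by rewrite /C pmulrn_rgt0 //; move: hk; case: K k => // [[]]. Qed.

Lemma Ystrip' (c h : R) : 0 < h ->
  (P (Y @^-1` `[c, (c + h)%R]) <= (C * h)%:E)%E.
Proof. by move=> h0; rewrite /C mulrnAl; exact: Ystrip. Qed.

Lemma setYle t : [set w | Y w <= t] = Y @^-1` `]-oo, t].
Proof. by apply/seteqP; split => w; rewrite /= in_itv. Qed.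

Lemma setYlt t : [set w | Y w < t] = Y @^-1` `]-oo, t[.
Proof. by apply/seteqP; split => w; rewrite /= in_itv. Qed.

Lemma mYle t : measurable [set w | Y w <= t].
Proof. by rewrite setYle /Y; apply: measurable_funPTI; exact: measurable_itv. Qed.

Lemma mYlt t : measurable [set w | Y w < t].
Proof. by rewrite setYlt /Y; apply: measurable_funPTI; exact: measurable_itv. Qed.

Lemma mYitv c e : measurable (Y @^-1` `[c, e]).
Proof. by rewrite /Y; apply: measurable_funPTI; exact: measurable_itv. Qed.

Lemma cdfYE t : P [set w | Y w <= t] = (cdfY k eps t)%:E.
Proof. by rewrite /cdfY fineK // fin_num_measure //; exact: mYle. Qed.

Lemma F_lip s t : s < t -> cdfY k eps t <= cdfY k eps s + C * (t - s).
Proof.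
move=> st; rewrite -lee_fin EFinD -!cdfYE.
have h0 : 0 < t - s by rewrite subr_gt0.
apply: (le_trans _ (leeD (lexx _) (Ystrip' s _ h0))).
apply: (le_trans _ (measureU2 _ (mYle s) (mYitv _ _))).
apply: (@le_measure _ _ _ P); rewrite ?inE.
- exact: mYle.
- by apply: measurableU; [exact: mYle|exact: mYitv].
move=> w /= Hw; have [ws|ws] := leP (Y w) s; [left|right] => //.
by rewrite /= in_itv /=; apply/andP; split; [exact: ltW|rewrite addrC subrK].
Qed.

Lemma F_nondec s t : s <= t -> cdfY k eps s <= cdfY k eps t.
Proof.
move=> st; rewrite -lee_fin -!cdfYE.
apply: (@le_measure _ _ _ P); rewrite ?inE; try exact: mYle.
by move=> w /= ws; exact: le_trans st.
Qed.

Lemma F_cont : continuous (cdfY k eps).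
Proof.
move=> x; apply/cvgrPdist_le => e e0.
apply/nbhs_normP; exists (e / C) => /=; first by rewrite divr_gt0.
move=> y /= xy.
have H : `|x - y| * C <= e by rewrite -ler_pdivlMr // ltW.
have [yx|xy'] := ltP y x.
  have := F_lip _ _ yx; have := F_nondec _ _ (ltW yx).
  rewrite gtr0_norm ?subr_gt0 // in H.
  rewrite ger0_norm; last by rewrite subr_ge0; exact: F_nondec (ltW yx).
  have -> : C * (x - y) = (x - y) * C by ring.
  move: ((x - y) * C) H => q H; lra.
have [<-|nxy] := eqVneq x y; first by rewrite subrr normr0 ltW.
have {}xy' : x < y by rewrite lt_neqAle nxy xy'.
have := F_lip _ _ xy'; have := F_nondec _ _ (ltW xy').
rewrite ltr0_norm ?subr_lt0 // in H.
rewrite ler0_norm; last by rewrite subr_le0; exact: F_nondec (ltW xy').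
have -> : C * (y - x) = - (x - y) * C by ring.
move: (- (x - y) * C) H => q H; lra.
Qed.

Lemma Plt t : P [set w | Y w < t] = (cdfY k eps t)%:E.
Proof.
have fin : P [set w | Y w < t] \is a fin_num by rewrite fin_num_measure //; exact: mYlt.
rewrite -(fineK fin); congr (_%:E); apply/le_anti/andP; split.
  rewrite -lee_fin (fineK fin) -cdfYE.
  apply: (@le_measure _ _ _ P); rewrite ?inE; try exact: mYle; try exact: mYlt.
  by move=> w /= /ltW.
apply/ler_addgt0Pr => e e0.
have h0 : 0 < e / C by rewrite divr_gt0.
rewrite -lee_fin EFinD (fineK fin) -cdfYE.
have -> : e = C * (e / C) by rewrite mulrC divfK // gt_eqF.
apply: (le_trans _ (leeD (lexx _) (Ystrip' t _ h0))).
apply: (le_trans _ (measureU2 _ (mYlt t) (mYitv _ _))).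
apply: (@le_measure _ _ _ P); rewrite ?inE.
- exact: mYle.
- by apply: measurableU; [exact: mYlt|exact: mYitv].
move=> w /= Hw; have [ws|ws] := ltP (Y w) t; [left|right] => //.
rewrite /= in_itv /=; apply/andP; split => //.
by apply: le_trans Hw _; rewrite lerDl ltW.
Qed.


Lemma F_strict s t : s < t -> cdfY k eps s < cdfY k eps t.
Proof.
move=> st.
pose m := (s + t) / 2; pose del := (t - s) / 4.
have del0 : 0 < del by rewrite divr_gt0 // subr_gt0.
pose Bf (j : 'I_K) : set R := if j == k then [set` `]- del, del[] else [set` `]m - del, m + del[].
have mBf j : measurable (Bf j) by rewrite /Bf; case: ifP => _; exact: measurable_itv.
pose B := \bigcap_(j in [set: 'I_K]) eps j @^-1` Bf j.
have mB : measurable B.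
  apply: fin_bigcap_measurable; first exact: finite_finset.
  by move=> j _; apply: measurable_funPTI.
have PB : P B = (\prod_(j < K) P (eps j @^-1` Bf j))%E.
  rewrite -(heps.1 Bf mBf); congr (P _); apply/seteqP; split => w /=.
    by move=> H j; exact: H.
  by move=> H j _; exact: H.
have PB0 : (0 < P B)%E.
  rewrite PB; apply: (big_ind (fun x => 0 < x)%E) => //.
  - by move=> x y; exact: mule_gt0.
  move=> j _; rewrite eps_dist //; rewrite /Bf; case: ifP => _; apply: normal_itv_gt0; lra.
have finB : P B \is a fin_num by rewrite fin_num_measure.
have fins : P [set w | Y w <= s] \is a fin_num by rewrite fin_num_measure //; exact: mYle.
have sub : [set w | Y w <= s] `|` B `<=` [set w | Y w <= t].
  move=> w [/= ws|Bw]; first by apply: le_trans ws (ltW st).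
  have [j jk' Ej] := @max_off_attain R K k jK (fun j => eps j w).
  have := Bw j I; have := Bw k I; rewrite /Bf eqxx (negbTE jk') /= !in_itv /=.
  move=> /andP[k1 k2] /andP[j1 j2]; rewrite /del in k1 k2; rewrite /Y /Yvar Ej /m /del in j1 j2 *; lra.
have dis : [set w | Y w <= s] `&` B = set0.
  apply/seteqP; split => // w [/= ws Bw].
  have [j jk' Ej] := @max_off_attain R K k jK (fun j => eps j w).
  have := Bw j I; have := Bw k I; rewrite /Bf eqxx (negbTE jk') /= !in_itv /=.
  move=> /andP[k1 k2] /andP[j1 j2]; rewrite /del in k1 k2; rewrite /Y /Yvar Ej /m /del in j1 j2 ws; lra.
have H : (P [set w | (Y w <= s)%R] + P B <= P [set w | (Y w <= t)%R])%E.
  rewrite -measureU //; last exact: mYle.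
  apply: (@le_measure _ _ _ P); rewrite ?inE //; last exact: mYle.
  by apply: measurableU => //; exact: mYle.
rewrite -lte_fin -!cdfYE; apply: lt_le_trans H.
rewrite -(fineK fins) -(fineK finB) -EFinD lte_fin ltrDl.
by rewrite -lte_fin fineK.
Qed.

Lemma cdf_Y t : fine (cdf (P:=P) (Yvar k eps) t) = cdfY k eps t.
Proof. by rewrite /cdf /cdfY /distribution /pushforward -setYle. Qed.

Lemma F_exists g : 0 < g -> g < 1 -> exists t, cdfY k eps t = g.
Proof.
move=> g0 g1.
have c1' : cdf (P:=P) (Yvar k eps) x @[x --> +oo] --> (1:R)%:E := cvg_cdfy1 _.
have c0' : cdf (P:=P) (Yvar k eps) x @[x --> -oo] --> (0:R)%:E := cvg_cdfNy0 _.
have c1 := fine_cvg c1'; have c0 := fine_cvg c0'.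
have [M2 [_ HM2]] := cvgr_gt _ (c1 _) _ g1.
have [M1 [_ HM1]] := cvgr_lt _ (c0 _) _ g0.
have F2 : g < cdfY k eps (M2 + 1) by rewrite -cdf_Y; apply: HM2; rewrite ltrDl.
have F1 : cdfY k eps (M1 - 1) < g by rewrite -cdf_Y; apply: HM1; rewrite ltrBlDr ltrDl.
have t12 : M1 - 1 <= M2 + 1.
  rewrite leNgt; apply/negP => H; have := F_nondec _ _ (ltW H); lra.
have bnd : Num.min (cdfY k eps (M1 - 1)) (cdfY k eps (M2 + 1)) <= g <=
    Num.max (cdfY k eps (M1 - 1)) (cdfY k eps (M2 + 1)).
  by rewrite ge_min le_max (ltW F1) (ltW F2) orbT.
have [c _ Hc] := @IVT R (cdfY k eps) _ _ g t12 (continuous_subspaceT F_cont) bnd.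
by exists c.
Qed.


Lemma zset (a s : R) : 0 < s ->
  [set w | zvec k eps a s w = stdbasis R K k] = [set w | Y w < a / s].
Proof.
move=> s0; apply/seteqP; split => w /=; rewrite /zvec.
- set W := wvec k eps a s w.
  have Wj j : j != k -> W j 0 = s * eps j w.
    by move=> jk'; rewrite /W /wvec !mxE (_ : (nat_of_ord j == k) = false) ?mulr0 ?add0r //; exact/negbTE.
  have Wk : W k 0 = a + s * eps k w by rewrite /W /wvec !mxE eqxx mulr1.
  rewrite (@max_off_scale R K k jK _ (fun j => eps j w) s s0 Wj) Wk.
  case: ifP => [H _|_].
    by rewrite /Y /Yvar ltr_pdivlMr //; move: H; nra.
  move/(congr1 (fun M : 'M[R]_(K, 1) => M k 0)); rewrite !mxE eqxx.
  by rewrite (ltn_eqF hk) => /eqP; rewrite eq_sym oner_eq0.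
- move=> H; set W := wvec k eps a s w.
  have Wj j : j != k -> W j 0 = s * eps j w.
    by move=> jk'; rewrite /W /wvec !mxE (_ : (nat_of_ord j == k) = false) ?mulr0 ?add0r //; exact/negbTE.
  have Wk : W k 0 = a + s * eps k w by rewrite /W /wvec !mxE eqxx mulr1.
  rewrite (@max_off_scale R K k jK _ (fun j => eps j w) s s0 Wj) Wk.
  rewrite /Y /Yvar ltr_pdivlMr // in H.
  have -> : s * max_off k (fun j => eps j w) < a + s * eps k w by nra.
  by [].
Qed.

Lemma main_sec (gamma : R) (hg0 : 0 < gamma) (hg1 : gamma < 1) :
  (exists! t : R, cdfY k eps t = gamma) /\
  (forall a s : R, 0 < s -> a ^+ 2 + s ^+ 2 = 1 ->
     cdfY k eps (a / s) = gamma ->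
     P [set w | zvec k eps a s w = stdbasis R K k] = gamma%:E) /\
  (exists a s : R, [/\ 0 < s, a ^+ 2 + s ^+ 2 = 1,
     cdfY k eps (a / s) = gamma &
     P [set w | zvec k eps a s w = stdbasis R K k] = gamma%:E]).
Proof.
have [t Ht] := F_exists _ hg0 hg1.
have part2 : forall a s : R, 0 < s -> a ^+ 2 + s ^+ 2 = 1 ->
     cdfY k eps (a / s) = gamma ->
     P [set w | zvec k eps a s w = stdbasis R K k] = gamma%:E.
  by move=> a s s0 _ Hg; rewrite zset // Plt Hg.
split.
  exists t; split => // t' Ht'.
  apply/le_anti/andP; split; rewrite leNgt; apply/negP => H;
    by have := F_strict _ _ H; rewrite Ht Ht' ltxx.
split; first exact: part2.
pose r := Num.sqrt (1 + t ^+ 2).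
have r0 : 0 < r by rewrite sqrtr_gt0; have := sqr_ge0 t; lra.
have r2 : r ^+ 2 = 1 + t ^+ 2 by rewrite sqr_sqrtr //; have := sqr_ge0 t; lra.
have s0 : 0 < 1 / r by rewrite divr_gt0.
have ats : t / r / (1 / r) = t by rewrite div1r invrK mulrAC -mulrA divff ?mulr1 // gt_eqF.
exists (t / r), (1 / r); split => //.
- rewrite !expr_div_n expr1n r2 -mulrDl addrC divff //.
  by rewrite gt_eqF //; have := sqr_ge0 t; lra.
- by rewrite ats.
- by apply: part2 => //; [rewrite !expr_div_n expr1n r2 -mulrDl addrC divff // gt_eqF //; have := sqr_ge0 t; lra | rewrite ats].
Qed.

End main.

Theorem lemma3p1 (R : realType) (d : measure_display) (T : measurableType d)
  (P : probability T R) (K : nat) (hK : (2 <= K)%N) (k : 'I_K)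
  (hk : (k < K.-1)%N) (eps : 'I_K -> {RV P >-> R})
  (heps : std_gaussian_vector eps) (gamma : R) (hg0 : 0 < gamma)
  (hg1 : gamma < 1) :
  (exists! t : R, cdfY k eps t = gamma) /\
  (forall a s : R, 0 < s -> a ^+ 2 + s ^+ 2 = 1 ->
     cdfY k eps (a / s) = gamma ->
     P [set w | zvec k eps a s w = stdbasis R K k] = gamma%:E) /\
  (exists a s : R, [/\ 0 < s, a ^+ 2 + s ^+ 2 = 1,
     cdfY k eps (a / s) = gamma &
     P [set w | zvec k eps a s w = stdbasis R K k] = gamma%:E]).
Proof. exact: main_sec. Qed.
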